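(* If $G$ is a connected block graph, then $\mu_t(G)=|\mathcal{S}(G)|=n(G)-|\mathcal{P}(G)|$.
   Context: All graphs are finite, simple and undirected; $n(G)$ denotes the order of $G$ and $N_G[v]$ the closed neighborhood of $v$. A block graph is a graph in which every block (maximal 2-connected subgraph or bridge) is a complete graph. Let $G$ be a connected graph and $X\subseteq V(G)$. Two vertices $x,y\in V(G)$ are $X$-visible if there exists a shortest $x,y$-path in $G$ none of whose internal vertices belongs to $X$. The set $X$ is a total mutual-visibility set of $G$ if every two vertices of $G$ are $X$-visible (the empty set is allowed). The total mutual-visibility number $\mu_t(G)$ is the maximum cardinality of a total mutual-visibility set of $G$. A vertex is simplicial if its neighbors induce a complete graph; $\mathcal{S}(G)$ is the set of simplicial vertices. $\mathcal{P}(G)$ is the set of vertices $v$ for which there exist two distinct vertices $u,w\in V(G)$ with $N_G[u]\cap N_G[w]=\{v\}$. *)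

(* Defs.v *)
(* a finite simple graph is a symmetric irreflexive relation
   e : rel T on a finType T (vertex set = all of T). *)
From mathcomp Require Import all_boot.
Set Implicit Arguments. Unset Strict Implicit. Unset Printing Implicit Defensive.

Section Graphs.
Variables (T : finType) (e : rel T).

Definition simple_graph : Prop := symmetric e /\ irreflexive e.

Definition connected_graph : Prop := forall x y : T, connect e x y.

Definition induced_rel (B : {set T}) : rel T :=
  [rel x y | [&& e x y, x \in B & y \in B]].

Definition connected_in (B : {set T}) : Prop :=
  forall x y, x \in B -> y \in B -> connect (induced_rel B) x y.

Definition nonseparable (B : {set T}) : Prop :=
  B != set0 /\ connected_in B /\ forall v, v \in B -> connected_in (B :\ v).

Definition is_block (B : {set T}) : Prop :=
  nonseparable B /\ forall B', nonseparable B' -> B \subset B' -> B' = B.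

Definition is_clique (B : {set T}) : Prop :=
  forall x y, x \in B -> y \in B -> x != y -> e x y.

Definition block_graph : Prop := forall B, is_block B -> is_clique B.

(* x :: p is a walk from x to y *)
Definition walk (x y : T) (p : seq T) : Prop := path e x p /\ last x p = y.

(* x :: p is a shortest x,y-path (length = size p) *)
Definition shortest_path (x y : T) (p : seq T) : Prop :=
  walk x y p /\ forall q, walk x y q -> size p <= size q.

(* internal vertices of the path x :: p *)
Definition internal (x : T) (p : seq T) : seq T := behead (belast x p).

Definition visible (X : {set T}) (x y : T) : Prop :=
  exists p, shortest_path x y p /\ all (fun v => v \notin X) (internal x p).

Definition total_mutual_visibility_set (X : {set T}) : Prop :=
  forall x y : T, visible X x y.

Definition mu_t_is (k : nat) : Prop :=
  (exists X : {set T}, total_mutual_visibility_set X /\ #|X| = k) /\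
  (forall X : {set T}, total_mutual_visibility_set X -> #|X| <= k).

Definition simplicial (v : T) : bool :=
  [forall u, forall w, (e v u && e v w && (u != w)) ==> e u w].

Definition simplicial_set : {set T} := [set v | simplicial v].

Definition closed_nbhd (v : T) : {set T} := [set u | (u == v) || e v u].

Definition P_set : {set T} :=
  [set v | [exists u, exists w,
     (u != w) && (closed_nbhd u :&: closed_nbhd w == [set v])]].

End Graphs.

(* Main.v *)
Require Import Defs.
From mathcomp Require Import all_boot.
From mathcomp Require Import zify.
From Stdlib Require Import Classical.
Set Implicit Arguments. Unset Strict Implicit. Unset Printing Implicit Defensive.

Lemma induced_sym (T : finType) (e : rel T) (B : {set T}) :
  symmetric e -> symmetric (induced_rel e B).
Proof.
move=> es x y; rewrite /induced_rel /= es.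
by case: (x \in B); case: (y \in B); rewrite ?andbT ?andbF.
Qed.

Lemma conn_radius (T : finType) (e : rel T) (A : {set T}) (r : T) :
  symmetric e -> r \in A ->
  (forall x, x \in A -> exists y, [/\ y \in A, y = r \/ e r y & x = y \/ e y x]) ->
  connected_in e A.
Proof.
move=> es rA H.
have Hr : forall x, x \in A -> connect (induced_rel e A) r x.
  move=> x xA; have [y [yA Hy Hx]] := H x xA.
  apply: (@connect_trans _ _ y).
    case: Hy => [->|ry]; first exact: connect0.
    by apply: connect1; rewrite /induced_rel /= ry rA yA.
  case: Hx => [->|yx]; first exact: connect0.
  by apply: connect1; rewrite /induced_rel /= yx yA xA.
move=> x y xA yA; apply: (@connect_trans _ _ r); last exact: Hr.
by rewrite (sym_connect_sym (induced_sym A es)); exact: Hr.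
Qed.

Ltac wit N := split; [ by rewrite !inE ?eqxx ?N | (by left) || (by right) | (by left) || (by right)].
Ltac find4 u v w a N := first [ exists u; wit N | exists v; wit N | exists w; wit N | exists a; wit N ].

Lemma four_nonsep (T : finType) (e : rel T) (u v w a : T) : symmetric e ->
  e u v -> e v w -> e w a -> e a u ->
  u != v -> u != w -> u != a -> v != w -> v != a -> w != a ->
  nonseparable e [set u; v; w; a].
Proof.
move=> es euv evw ewa eau nuv nuw nua nvw nva nwa.
have evu : e v u by rewrite es.
have ewv : e w v by rewrite es.
have eaw : e a w by rewrite es.
have eua : e u a by rewrite es.
have N1 : (v == u) = false by rewrite eq_sym (negbTE nuv).
have N2 : (w == u) = false by rewrite eq_sym (negbTE nuw).
have N3 : (a == u) = false by rewrite eq_sym (negbTE nua).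
have N4 : (w == v) = false by rewrite eq_sym (negbTE nvw).
have N5 : (a == v) = false by rewrite eq_sym (negbTE nva).
have N6 : (a == w) = false by rewrite eq_sym (negbTE nwa).
have N := (negbTE nuv, negbTE nuw, negbTE nua, negbTE nvw, negbTE nva, negbTE nwa,
  N1, N2, N3, N4, N5, N6).
split; first by apply/set0Pn; exists u; rewrite !inE eqxx.
split.
  apply: (@conn_radius _ _ _ u) => //; first by rewrite !inE eqxx.
  by move=> x; rewrite !inE => /orP [/orP [/orP [|]|]|] /eqP Ex; subst x; find4 u v w a N.
move=> z; rewrite !inE => /orP [/orP [/orP [|]|]|] /eqP Ez; subst z.
- apply: (@conn_radius _ _ _ w) => //; first by rewrite !inE ?eqxx ?N.
  move=> x /setD1P [xz]; rewrite !inE => /orP [/orP [/orP [|]|]|] /eqP Ex; subst x;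
  (try by rewrite eqxx in xz); find4 u v w a N.
- apply: (@conn_radius _ _ _ a) => //; first by rewrite !inE ?eqxx ?N.
  move=> x /setD1P [xz]; rewrite !inE => /orP [/orP [/orP [|]|]|] /eqP Ex; subst x;
  (try by rewrite eqxx in xz); find4 u v w a N.
- apply: (@conn_radius _ _ _ u) => //; first by rewrite !inE ?eqxx ?N.
  move=> x /setD1P [xz]; rewrite !inE => /orP [/orP [/orP [|]|]|] /eqP Ex; subst x;
  (try by rewrite eqxx in xz); find4 u v w a N.
- apply: (@conn_radius _ _ _ v) => //; first by rewrite !inE ?eqxx ?N.
  move=> x /setD1P [xz]; rewrite !inE => /orP [/orP [/orP [|]|]|] /eqP Ex; subst x;
  (try by rewrite eqxx in xz); find4 u v w a N.
Qed.

Lemma nonsep_clique (T : finType) (e : rel T) (B : {set T}) :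
  block_graph e -> nonseparable e B -> is_clique e B.
Proof.
move=> Hb HB.
have [n Hn] : exists n, #|T| - #|B| <= n by exists (#|T| - #|B|).
elim: n B HB Hn => [|n IH] B HB Hn.
all: case: (classic (is_block e B)) => [Hbl|Hnb]; first exact: Hb.
all: have [B' [HB' [sub neq]]] : exists B', nonseparable e B' /\ B \subset B' /\ B' <> B.
all: try (apply: NNPP => Hn2; apply: Hnb; split => // B' H1 H2;
       apply: NNPP => H3; apply: Hn2; by exists B').
all: have lt : #|B| < #|B'| by
      rewrite ltn_neqAle subset_leq_card // andbT;
      apply/negP => /eqP Ec; apply: neq; apply/eqP; rewrite eq_sym eqEcard sub Ec leqnn.
all: have le : #|B'| <= #|T| by exact: max_card.
- exfalso; lia.
- have Hc := IH B' HB' ltac:(lia).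
  by move=> x y xB yB; apply: Hc; apply: (subsetP sub).
Qed.

Lemma common_unique (T : finType) (e : rel T) (u v w a : T) :
  symmetric e -> irreflexive e -> block_graph e ->
  e u v -> e v w -> e u a -> e a w -> u != w -> ~~ e u w -> a = v.
Proof.
move=> es eirr Hb euv evw eua eaw nuw neuw.
case: (eqVneq a v) => // nav; exfalso.
have nuv : u != v by apply: contraTneq euv => ->; rewrite eirr.
have nvw : v != w by apply: contraTneq evw => ->; rewrite eirr.
have nua : u != a by apply: contraTneq eua => ->; rewrite eirr.
have nwa : w != a by apply: contraTneq eaw => ->; rewrite eirr.
have nva : v != a by rewrite eq_sym.
have ewa : e w a by rewrite es.
have eau : e a u by rewrite es.
have H := nonsep_clique Hb (four_nonsep es euv evw ewa eau nuv nuw nua nvw nva nwa).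
move/negP: neuw; apply; apply: H => //; by rewrite !inE eqxx ?orbT.
Qed.

Lemma belast_split (T : eqType) (a v : T) p :
  v \in belast a p -> exists s1 w s2, a :: p = s1 ++ v :: w :: s2.
Proof.
elim: p a => [|b p IH] a /=; first by rewrite in_nil.
rewrite inE => /orP [/eqP ->|H]; first by exists [::], b, p.
have [s1 [w [s2 E]]] := IH b H.
by exists (a :: s1), w, s2; rewrite E.
Qed.

Lemma internal_split (T : finType) (x v : T) p :
  v \in internal x p -> exists s1 w s2, p = s1 ++ v :: w :: s2.
Proof. case: p => [|b p] /=; [by rewrite /internal /= in_nil | exact: belast_split]. Qed.

Lemma exists_shortest (T : finType) (e : rel T) x y :
  connect e x y -> exists p, shortest_path e x y p.
Proof.
move/connectP => [p pp yl].
have W : walk e x y p by split.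
have := leqnn (size p); move: {2}(size p) => n.
clear pp yl; elim: n p W => [|n IH] p W Hs.
all: case: (classic (forall q, walk e x y q -> size p <= size q)) => [H|H];
  first by exists p.
all: move/not_all_ex_not: H; case=> q H; have [Wq H'] := imply_to_and _ _ H.
all: move/negP: H'; rewrite -ltnNge => lt.
- exfalso; lia.
- apply: (IH q Wq); lia.
Qed.

Lemma shortest_internal_nonsimp (T : finType) (e : rel T) x y p v :
  symmetric e -> shortest_path e x y p -> v \in internal x p -> ~~ simplicial e v.
Proof.
move=> es [[pp lp] Hmin] /internal_split [s1 [w [s2 E]]]; subst p.
move: pp; rewrite cat_path /= => /andP [p1 /andP [euv /andP [evw p2]]].
rewrite last_cat /= in lp.
apply/forallPn; exists (last x s1); apply/forallPn; exists w; rewrite negb_imply.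
rewrite evw andbT [e v _]es euv /=; apply/andP; split.
  apply/eqP => uw.
  have := Hmin (s1 ++ s2); rewrite !size_cat /=.
  have -> : size s1 + (size s2).+2 <= size s1 + size s2 = false by lia.
  by move=> H; suff: false by []; apply: H; split; rewrite ?cat_path ?last_cat uw ?p1.
apply/negP => euw.
have := Hmin (s1 ++ w :: s2); rewrite !size_cat /=.
have -> : size s1 + (size s2).+2 <= size s1 + (size s2).+1 = false by lia.
by move=> H; suff: false by []; apply: H; split; rewrite ?cat_path ?last_cat /= ?p1 ?euw.
Qed.

Lemma nonsimp_witness (T : finType) (e : rel T) v :
  ~~ simplicial e v -> exists u w, [/\ e v u, e v w, u != w & ~~ e u w].
Proof.
move/forallPn => [u /forallPn [w]]; rewrite negb_imply.
by case/andP => /andP [/andP [evu evw] uw] nuw; exists u, w.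
Qed.

Theorem corollary3p4 (T : finType) (e : rel T) :
  simple_graph e -> connected_graph e -> block_graph e ->
  mu_t_is e #|simplicial_set e| /\
  #|simplicial_set e| = #|T| - #|P_set e|.
Proof.
move=> [es eirr] Hc Hb.
have tmvS : total_mutual_visibility_set e (simplicial_set e).
  move=> x y; have [p Sp] := exists_shortest (Hc x y).
  exists p; split => //; apply/allP => v vin; rewrite inE.
  exact: shortest_internal_nonsimp es Sp vin.
have subS : forall X, total_mutual_visibility_set e X -> X \subset simplicial_set e.
  move=> X HX; apply/subsetP => v vX; rewrite inE; apply/negPn/negP => ns.
  have [u [w [evu evw uw nuw]]] := nonsimp_witness ns.
  have [p [[[pp lp] Hmin] Hall]] := HX u w.
  have euv : e u v by rewrite es.
  have := Hmin [:: v; w]; rewrite /walk /= euv evw => /(_ (conj erefl erefl)).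
  case: p pp lp Hall {Hmin} => [|a [|b [|c q]]] //= pp lp Hall _.
  - by move: uw; rewrite lp eqxx.
  - by subst a; move: nuw; rewrite andbT in pp; rewrite pp.
  - subst b; rewrite andbT in pp; case/andP: pp => eua eaw.
    rewrite /internal /= andbT in Hall.
    have av := common_unique es eirr Hb euv evw eua eaw uw nuw.
    by move: Hall; rewrite av vX.
have PS : P_set e = ~: simplicial_set e.
  apply/setP => v; rewrite !inE; apply/idP/idP.
    move/existsP => [u /existsP [w /andP [uw /eqP E]]].
    have H z : ((z == u) || e u z) && ((z == w) || e w z) = (z == v).
      by move/setP: E => /(_ z); rewrite !inE.
    apply/negP => sv.
    have := H v; rewrite eqxx => /andP [hu hw].
    case/orP: hu => [/eqP vu|euv].
      subst v; case/orP: hw => [/eqP uw'|ewu]; first by rewrite uw' eqxx in uw.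
      have := H w; rewrite [e u w]es ewu eqxx ?orbT ?orTb /= eq_sym.
      by move=> E'; rewrite -E' in uw.
    case/orP: hw => [/eqP vw|ewv].
      subst v; have := H u; rewrite eqxx [e w u]es euv /= orbT => E'.
      by rewrite -E' in uw.
    have euw : e u w.
      move/forallP/(_ u)/forallP/(_ w)/implyP: sv; apply.
      by rewrite [e v u]es euv [e v w]es ewv uw.
    have := H u; rewrite eqxx [e w u]es euw /= orbT => /esym/eqP uv.
    by rewrite uv eirr in euv.
  move=> ns; have [u [w [evu evw uw nuw]]] := nonsimp_witness ns.
  apply/existsP; exists u; apply/existsP; exists w; rewrite uw /=.
  apply/eqP/setP => z; rewrite !inE.
  apply/idP/idP.
    case/andP => /orP [/eqP ->|euz] /orP [/eqP zw|ewz].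
    - by rewrite zw eqxx in uw.
    - by rewrite [e w u]es (negbTE nuw) in ewz.
    - by subst z; rewrite euz in nuw.
    - have euv : e u v by rewrite es.
      rewrite (common_unique es eirr Hb euv evw euz) ?eqxx //.
      by rewrite es.
  move/eqP ->; by rewrite [e u v]es [e w v]es evu evw !orbT.
split.
  split; first by exists (simplicial_set e).
  by move=> X HX; apply: subset_leq_card; apply: subS.
rewrite PS; have := cardsC (simplicial_set e); lia.
Qed.
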